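(* Let $m\ge1$, $n=2^m-1$, and let $\iota,\kappa\in\dot F^m$ be such that the Hamming distances $d(\iota,0^m)$, $d(\kappa,0^m)$ and $d(\iota,\kappa)$ are all at least $3$. Then the sets $R_\iota+\hat\iota+\bar e^{(\iota)}$ and $R_\kappa+\hat\kappa+\bar e^{(\kappa)}$ are disjoint, and neither of them contains $0^n$.
   Context: $F^m$ denotes the vector space of binary $m$-tuples over $GF(2)$, and $\dot F^m := F^m\setminus\{0^m\}$. Let $\pi^{(1)}=(10\ldots0),\ldots,\pi^{(m)}=(0\ldots01)$ be the standard basis of $F^m$. The coordinates of words $\bar w\in F^n$ ($n=2^m-1$) are indexed by the elements of $\dot F^m$, $\bar w=\{w_\alpha\}_{\alpha\in\dot F^m}$, where the first $m$ coordinates have indices $\pi^{(1)},\ldots,\pi^{(m)}$ (in this order) and the remaining $n-m$ indices are in some fixed order. $\bar e^{(\iota)}\in F^n$ is the word with a single $1$ in the coordinate indexed by $\iota$. For $\alpha\in F^m$, $\hat\alpha := (\alpha,0^{n-m})\in F^n$, i.e. $\hat\alpha=\sum_{i=1}^m \alpha_i \bar e^{(\pi^{(i)})}$. The Hamming code is $H:=\{\bar c\in F^n \mid \sum_{\alpha\in\dot F^m} c_\alpha\alpha = 0^m\}$. For $\iota\in\dot F^m$, $R_\iota := \{\bar c\in H \mid c_\alpha=c_{\alpha+\iota} \text{ for all } \alpha\in F^m\setminus\{0^m,\iota\}\}$. $d(\cdot,\cdot)$ is the Hamming distance. *)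

(* Defs.v *)
From HB Require Import structures.
From mathcomp Require Import all_boot all_order all_algebra.
Set Implicit Arguments. Unset Strict Implicit. Unset Printing Implicit Defensive.
Import GRing.Theory.
Local Open Scope ring_scope.

Notation Fm m := 'rV['F_2]_m.

(* Index set \dot F^m = F^m \ {0^m}; words of F^n (n = 2^m - 1) are indexed by it. *)
Definition idx (m : nat) := {x : Fm m | x != 0}.
Notation word m := {ffun idx m -> 'F_2}.

Definition pi_ (m : nat) (i : 'I_m) : Fm m := delta_mx 0 i.

Definition hdist (m : nat) (x y : Fm m) : nat := #|[set i : 'I_m | x 0 i != y 0 i]|.

Definition unitw (m : nat) (iota : Fm m) : word m :=
  [ffun a : idx m => ((val a == iota) : nat)%:R].

Definition hatw (m : nat) (alpha : Fm m) : word m :=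
  [ffun a : idx m => \sum_(i < m) alpha 0 i * unitw (pi_ i) a].

Definition inH (m : nat) (c : word m) : bool :=
  \sum_(a : idx m) c a *: (val a : Fm m) == 0.

Definition R_ (m : nat) (iota : Fm m) : {set word m} :=
  [set c : word m | inH c &&
     [forall a : idx m, forall b : idx m, (val b == val a + iota) ==> (c a == c b)]].

(* the translate R_iota + hat iota + e^(iota) = { c + v | c in R_iota } = { w | w - v in R_iota } *)
Definition Rshift (m : nat) (iota : Fm m) : {set word m} :=
  [set w : word m | (w - (hatw iota + unitw iota)) \in R_ iota].

(* Main.v *)
Require Import Defs.
From mathcomp Require Import all_boot all_order all_algebra.
Import GRing.Theory.
Set Implicit Arguments. Unset Strict Implicit.
Local Open Scope ring_scope.

Lemma c2 (z : 'F_2) : z + z = 0.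
Proof. by apply: addrr_pchar2; apply: pchar_Fp. Qed.
Lemma c2m m (z : Fm m) : z + z = 0.
Proof. by apply/matrixP => i j; rewrite !mxE c2. Qed.
Lemma F2s m (a b c : Fm m) : a + b = c -> b = a + c.
Proof. by move<-; rewrite addrA c2m add0r. Qed.
Lemma F2z m (a b : Fm m) : a + b = 0 -> a = b.
Proof. by move/F2s; rewrite addr0 => ->. Qed.

Lemma wt_le2 m (x : Fm m) i j :
  (forall k, x 0 k != 0 -> (k == i) || (k == j)) -> (hdist x 0 <= 2)%N.
Proof.
move=> H; rewrite /hdist.
apply: leq_trans (_ : #|[set i; j]| <= 2)%N; last by rewrite cards2; case: (i != j).
apply: subset_leq_card; apply/subsetP => k; rewrite !inE mxE => /H.
by [].
Qed.

Lemma pi_entry m (i k : 'I_m) : pi_ i 0 k = ((k == i) : nat)%:R.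
Proof. by rewrite /pi_ mxE eqxx. Qed.

Lemma wt3_sum2 m (x : Fm m) i j : (3 <= hdist x 0)%N -> x <> pi_ i + pi_ j.
Proof.
move=> H E; suff L : (hdist x 0 <= 2)%N by move: (leq_trans H L).
apply: (@wt_le2 _ x i j) => k.
rewrite E mxE !pi_entry.
by case: (k == i); case: (k == j); rewrite ?addr0 ?add0r ?eqxx.
Qed.

Lemma wt3_pi m (x : Fm m) i : (3 <= hdist x 0)%N -> x <> pi_ i.
Proof.
move=> H E; suff L : (hdist x 0 <= 2)%N by move: (leq_trans H L).
apply: (@wt_le2 _ x i i) => k.
rewrite E !pi_entry; by case: (k == i); rewrite ?eqxx.
Qed.

Lemma pi_neq0 m (i : 'I_m) : pi_ i != 0.
Proof. by apply/eqP => /matrixP/(_ 0 i); rewrite pi_entry mxE eqxx; apply/eqP; rewrite oner_eq0. Qed.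

Lemma pi_inj m (i j : 'I_m) : (pi_ i == pi_ j) = (i == j).
Proof.
apply/eqP/eqP => [/matrixP/(_ 0 i)|->//]; rewrite !pi_entry eqxx.
by case: eqP => // _ /eqP; rewrite oner_eq0.
Qed.

Lemma hdist_sum m (x y : Fm m) : hdist x y = hdist (x + y) 0.
Proof.
rewrite /hdist; apply: eq_card => k; rewrite !inE !mxE.
by rewrite -subr_eq0 (oppr_pchar2 (pchar_Fp _)).
Qed.

Lemma vE m (x : Fm m) (a : idx m) : (hatw x + unitw x) a =
  \sum_(j < m) x 0 j * ((val a == pi_ j) : nat)%:R + ((val a == x) : nat)%:R.
Proof. rewrite !ffunE; congr (_ + _); by apply: eq_bigr => j _; rewrite ffunE. Qed.

Lemma v_pi m (x : Fm m) (a : idx m) i : val a = pi_ i -> x != pi_ i ->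
  (hatw x + unitw x) a = x 0 i.
Proof.
move=> E H; have H' : (pi_ i == x) = false by rewrite eq_sym; apply/negbTE.
rewrite vE E H' addr0 (bigD1 i) //= eqxx mulr1 big1 ?addr0 // => j /negbTE.
by rewrite pi_inj eq_sym => ->; rewrite mulr0.
Qed.

Lemma v_0 m (x : Fm m) (a : idx m) : (forall j, val a != pi_ j) -> val a != x ->
  (hatw x + unitw x) a = 0.
Proof.
move=> H1 H2; rewrite vE (negbTE H2) addr0 big1 // => j _.
by rewrite (negbTE (H1 j)) mulr0.
Qed.

Lemma pairR m (I : Fm m) (c : word m) (a b : idx m) :
  c \in R_ I -> val b = val a + I -> c a = c b.
Proof.
rewrite inE => /andP [_ /forallP /(_ a) /forallP /(_ b) /implyP H] E.
by apply/eqP; apply: H; rewrite E.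
Qed.

Lemma pairS m (I : Fm m) (w : word m) (a b : idx m) :
  w \in Rshift I -> val b = val a + I ->
  w a - (hatw I + unitw I) a = w b - (hatw I + unitw I) b.
Proof.
rewrite inE => /pairR H /H; by rewrite !ffunE.
Qed.

Section Core.
Variables (m : nat) (I K : Fm m) (i : 'I_m).
Hypotheses (HI : (3 <= hdist I 0)%N) (HK : (3 <= hdist K 0)%N)
  (HD : (3 <= hdist (I + K) 0)%N).
Let P := pi_ i.

Lemma n1 : P + I != 0.
Proof. by apply/eqP => /F2z E; apply: (@wt3_pi _ _ i HI); rewrite -E. Qed.
Lemma n2 : P + K != 0.
Proof. by apply/eqP => /F2z E; apply: (@wt3_pi _ _ i HK); rewrite -E. Qed.
Lemma n3 : P + I + K != 0.
Proof. by apply/eqP; rewrite -addrA => /F2z E; apply: (@wt3_pi _ _ i HD); rewrite -E. Qed.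

Lemma nb1 j : P + I != pi_ j.
Proof. by apply/eqP => /F2s E; apply: (@wt3_sum2 _ _ i j HI). Qed.
Lemma nb2 j : P + K != pi_ j.
Proof. by apply/eqP => /F2s E; apply: (@wt3_sum2 _ _ i j HK). Qed.
Lemma nb3 j : P + I + K != pi_ j.
Proof. by apply/eqP; rewrite -addrA => /F2s E; apply: (@wt3_sum2 _ _ i j HD). Qed.

Lemma e1I : P + I != I.
Proof. by apply/eqP => /(canRL (addrK I)); rewrite subrr; apply/eqP/pi_neq0. Qed.
Lemma e2K : P + K != K.
Proof. by apply/eqP => /(canRL (addrK K)); rewrite subrr; apply/eqP/pi_neq0. Qed.
Lemma e2I : P + K != I.
Proof.
apply/eqP => /F2s E; apply: (@wt3_pi _ _ i HD).
by rewrite E addrCA c2m addr0.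
Qed.
Lemma e1K : P + I != K.
Proof.
apply/eqP => /F2s E; apply: (@wt3_pi _ _ i HD).
by rewrite E -addrA c2m addr0.
Qed.
Lemma e3I : P + I + K != I.
Proof.
apply/eqP; rewrite addrAC => /(canRL (addrK I)); rewrite subrr => /F2z E.
by apply: (@wt3_pi _ _ i HK); rewrite -E.
Qed.
Lemma e3K : P + I + K != K.
Proof.
apply/eqP => /(canRL (addrK K)); rewrite subrr => /F2z E.
by apply: (@wt3_pi _ _ i HI); rewrite -E.
Qed.

Lemma core (w : word m) : I 0 i != K 0 i -> w \in Rshift I -> w \in Rshift K -> False.
Proof.
move=> Hi wI wK.
pose a0 : idx m := exist _ P (pi_neq0 i).
pose a1 : idx m := exist _ (P + I) n1.
pose a2 : idx m := exist _ (P + K) n2.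
pose a3 : idx m := exist _ (P + I + K) n3.
have E1 := pairS (a := a0) (b := a1) wI erefl.
have E2 := pairS (a := a2) (b := a3) wI (addrAC _ _ _).
have E3 := pairS (a := a0) (b := a2) wK erefl.
have E4 := pairS (a := a1) (b := a3) wK erefl.
rewrite (@v_pi _ I a0 i) // in E1; last by apply/eqP => E; apply: (@wt3_pi _ _ i HI).
rewrite (@v_pi _ K a0 i) // in E3; last by apply/eqP => E; apply: (@wt3_pi _ _ i HK).
rewrite (@v_0 _ I a1) ?(nb1, e1I) // in E1.
rewrite (@v_0 _ I a2) ?(nb2, e2I) // in E2.
rewrite (@v_0 _ I a3) ?(nb3, e3I) // in E2.
rewrite (@v_0 _ K a2) ?(nb2, e2K) // in E3.
rewrite (@v_0 _ K a1) ?(nb1, e1K) // in E4.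
rewrite (@v_0 _ K a3) ?(nb3, e3K) // in E4.
rewrite !subr0 in E1 E2 E3 E4.
move/eqP: Hi; apply; apply: (@oppr_inj _); apply: (@addrI _ (w a0)).
  by rewrite E1 E3 E4 E2.
all: move=> j; first [exact: nb1 | exact: nb2 | exact: nb3].
Qed.
Lemma zero : I 0 i != 0 -> (0 : word m) \in Rshift I -> False.
Proof.
move=> Hi wI.
pose a0 : idx m := exist _ P (pi_neq0 i).
pose a1 : idx m := exist _ (P + I) n1.
have E1 := pairS (a := a0) (b := a1) wI erefl.
rewrite (@v_pi _ I a0 i) // in E1; last by apply/eqP => E; apply: (@wt3_pi _ _ i HI).
rewrite (@v_0 _ I a1) ?(e1I) // in E1; last by move=> j; exact: nb1.
rewrite !ffunE !sub0r oppr0 in E1.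
by move/eqP: Hi; apply; apply: oppr_inj; rewrite E1 oppr0.
Qed.
End Core.

Theorem lemma3 (m : nat) (iota kappa : Fm m) :
  (1 <= m)%N -> iota != 0 -> kappa != 0 ->
  (3 <= hdist iota 0)%N -> (3 <= hdist kappa 0)%N -> (3 <= hdist iota kappa)%N ->
  [disjoint Rshift iota & Rshift kappa] /\
  (0 : word m) \notin Rshift iota /\ (0 : word m) \notin Rshift kappa.
Proof.
move=> _ _ _ HI HK HIK.
have HD : (3 <= hdist (iota + kappa) 0)%N by rewrite -hdist_sum.
have ex (x y : Fm m) : (3 <= hdist x y)%N -> exists i, x 0 i != y 0 i.
  move=> H; have : (0 < hdist x y)%N by apply: leq_trans H.
  by rewrite /hdist card_gt0 => /set0Pn [k]; rewrite inE => Hk; exists k.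
split; last split.
- rewrite disjoint_subset; apply/subsetP => w wI; rewrite inE; apply/negP => wK.
  have [i Hi] := ex _ _ HIK.
  exact: (@core _ _ _ i HI HK HD w Hi wI wK).
- apply/negP => w0; have [i Hi] := ex _ _ HI; rewrite mxE in Hi.
  exact: (@zero _ _ i HI Hi w0).
- apply/negP => w0; have [i Hi] := ex _ _ HK; rewrite mxE in Hi.
  exact: (@zero _ _ i HK Hi w0).
Qed.
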